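(* Let $G$ be a mean-payoff game with limited-observation and $\Gamma_G$ its associated reachability game. If Eve (respectively Adam) has a winning strategy in $\Gamma_G$, then Eve (respectively Adam) has a winning observation-based strategy with finite memory in $G$.
   Context: An MPG with limited-observation is a tuple $G=\langle Q,q_I,\Sigma,\Delta,w,Obs\rangle$: $Q$ finite set of states, $q_I\in Q$, $\Sigma$ finite set of actions, $\Delta\subseteq Q\times\Sigma\times Q$ total, $w:\Delta\to\mathbb{Z}$, $Obs$ a partition of $Q$, with $\{q_I\}\in Obs$ and, for each $o\in Obs,\sigma\in\Sigma$, $\mathrm{post}_\sigma(o)=\{q':\exists q\in o,(q,\sigma,q')\in\Delta\}$ a union of elements of $Obs$. Abstract paths $o_0\sigma_0o_1\ldots$ ($o_i\in Obs$, with some transition under $\sigma_i$ from $o_i$ to $o_{i+1}$), concrete paths $\gamma(\psi)$ (sequences $q_0\sigma_0q_1\ldots$ with $q_i\in o_i$, $(q_i,\sigma_i,q_{i+1})\in\Delta$), plays (infinite abstract paths starting at $\{q_I\}$), $\mathrm{Prefs}(G)$ (finite prefixes of plays ending in an observation), $\underline{MP}(\pi)=\liminf_n\frac1n\sum_{i<n}w(q_i,\sigma_i,q_{i+1})$. A play $\psi$ is winning for Eve if $\underline{MP}(\pi)\ge0$ for all $\pi\in\gamma(\psi)$, else for Adam. Observation-based strategies: for Eve $\lambda_\exists:\mathrm{Prefs}(G)\to\Sigma$; for Adam $\lambda_\forall:\mathrm{Prefs}(G)\times\Sigma\to Obs$ with $\lambda_\forall(o_0\ldots o_n,\sigma)\cap\mathrm{post}_\sigma(o_n)\ne\emptyset$;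 consistency as usual; winning if all consistent plays are winning. Eve's strategy has memory $m$ if there are $M$ with $|M|=m$, $m_0\in M$, $\alpha_u:M\times Obs\to M$, $\alpha_o:M\times Obs\to\Sigma$ with $\lambda_\exists(o_0\sigma_0\ldots o_n)=\alpha_o(m_n,o_n)$, $m_{i+1}=\alpha_u(m_i,o_i)$; Adam's has memory $m$ if there are $M$, $m_0$, $\alpha_u:M\times Obs\times\Sigma\to M$, $\alpha_o:M\times Obs\times\Sigma\to Obs$ with $\lambda_\forall(o_0\sigma_0\ldots o_n,\sigma_n)=\alpha_o(m_n,o_n,\sigma_n)$, $m_{i+1}=\alpha_u(m_i,o_i,\sigma_i)$. Finite memory means memory $m$ for some finite $m$. Reachability game $\Gamma_G$: let $\mathcal{F}$ be the set of functions $f:Q\to\mathbb{Z}\cup\{+\infty,\bot\}$, $\mathrm{supp}(f)=\{q:f(q)\ne\bot\}$. $f'$ is a $\sigma$-successor of $f$ if $\mathrm{supp}(f')\in Obs$, $\mathrm{supp}(f')\subseteq\mathrm{post}_\sigma(\mathrm{supp}(f))$, and for every $q\in\mathrm{supp}(f')$, $f'(q)$ equals either $\min\{f(q')+w(q',\sigma,q): q'\in\mathrm{supp}(f),(q',\sigma,q)\in\Delta\}$ or $+\infty$. For $k\in\mathbb{N}$, $f\preceq_k f'$ iff $\mathrm{supp}(f)=\mathrm{supp}(f')$ and $f(q)+k\le f'(q)$ for all $q\in\mathrm{supp}(f)$ (with $+\infty+k=+\infty$). Let $f_I(q_I)=0$ and $f_I(q)=\bot$ for $q\ne q_I$. $\Pi_G$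 is the set of sequences $f_0\sigma_0f_1\ldots\sigma_{n-1}f_n$ with $f_0=f_I$, each $f_{i+1}$ a $\sigma_i$-successor of $f_i$, and for all $0\le i<j<n$: $f_i\not\preceq_0 f_j$ and $f_j\not\preceq_1 f_i$. $\mathcal{T}_\exists$ is the set of such sequences with $f_i\preceq_0 f_n$ for some $i<n$; $\mathcal{T}_\forall$ is the set of such sequences with, for some $i<n$, $f_n\preceq_1 f_i$ and $f_i(q)\ne+\infty$ for some $q\in\mathrm{supp}(f_i)$. $\Gamma_G$ is played from the sequence $f_I$: at the current sequence $x$, Eve chooses $\sigma\in\Sigma$ and Adam chooses $f$ with $x\sigma f\in\Pi_G$; the game stops when the current sequence lies in $\mathcal{T}_\exists$ (Eve wins) or in $\mathcal{T}_\forall$ (Adam wins). A strategy in $\Gamma_G$ (a function from histories to actions for Eve, to successor sequences for Adam) is winning for Eve (Adam) if every play consistent with it reaches $\mathcal{T}_\exists$ ($\mathcal{T}_\forall$). *)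

(* Defs.v *)
From HB Require Import structures.
From mathcomp Require Import all_boot all_order all_algebra.
From mathcomp Require Import boolp classical_sets reals ereal topology sequences.
From mathcomp Require Import Rstruct.

Set Implicit Arguments.
Unset Strict Implicit.
Unset Printing Implicit Defensive.

Import Order.TTheory GRing.Theory Num.Theory.

(* Raw data of an MPG with limited observation
   G = <Q, q_I, Sigma, Delta, w, Obs>.  The weight function is given on all
   triples; only its values on Delta matter. Observations are subsets of Q. *)
Record mpg := MPG {
  St : finType;
  Act : finType;
  qI : St;
  Delta : St -> Act -> St -> bool;
  w : St -> Act -> St -> int;
  Obs : {set {set St}}
}.

Section MPG.
Variable G : mpg.
Local Notation Q := (St G).
Local Notation Sig := (Act G).

Definition post (s : Sig) (A : {set Q}) : {set Q} :=
  [set q' | [exists q in A, Delta q s q']].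

Definition wf_mpg : Prop :=
  (forall (q : Q) (s : Sig), exists q' : Q, Delta q s q') /\
  finset.partition (Obs G) [set: Q] /\
  [set qI G] \in Obs G /\
  (forall o s, o \in Obs G ->
     exists2 U : {set {set Q}}, U \subset Obs G &
       post s o = finset.cover U).

Definition is_play (o : nat -> {set Q}) (s : nat -> Sig) : Prop :=
  o 0%N = [set qI G] /\
  (forall i, o i \in Obs G) /\
  (forall i, exists q : Q, exists q' : Q,
      [/\ q \in o i, q' \in o i.+1 & Delta q (s i) q']).

Definition is_concrete (o : nat -> {set Q}) (s : nat -> Sig) (q : nat -> Q) : Prop :=
  forall i, q i \in o i /\ Delta (q i) (s i) (q i.+1).

Definition MP (s : nat -> Sig) (q : nat -> Q) : \bar Rdefinitions.R :=
  limn_einf (fun n : nat =>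
    (((\sum_(i < n) w (q i) (s i) (q i.+1))%:~R / n%:R : Rdefinitions.R)%:E)).

Definition play_winE (o : nat -> {set Q}) (s : nat -> Sig) : Prop :=
  forall q, is_concrete o s q -> (0 <= MP s q)%E.

(* Histories (finite sequences o_0 s_0 ... s_{n-1} o_n): the list of
   past (o_i, s_i) pairs, in chronological order, and the last observation. *)
Definition hist := (seq ({set Q} * Sig) * {set Q})%type.

Definition hist_of (o : nat -> {set Q}) (s : nat -> Sig) (n : nat) : hist :=
  ([seq (o i, s i) | i <- iota 0 n], o n).

Definition is_pref (h : hist) : Prop :=
  exists o s, is_play o s /\ h = hist_of o s (size h.1).

Definition stratE := hist -> Sig.
Definition stratA := hist -> Sig -> {set Q}.

Definition valid_stratA (l : stratA) : Prop :=
  forall h s, is_pref h ->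
    l h s \in Obs G /\ l h s :&: post s h.2 != finset.set0.

Definition consistentE (l : stratE) o s : Prop :=
  forall i, s i = l (hist_of o s i).

Definition consistentA (l : stratA) o s : Prop :=
  forall i, o i.+1 = l (hist_of o s i) (s i).

Definition winningE (l : stratE) : Prop :=
  forall o s, is_play o s -> consistentE l o s -> play_winE o s.

Definition winningA (l : stratA) : Prop :=
  forall o s, is_play o s -> consistentA l o s -> ~ play_winE o s.

(* Finite memory. The memory state after the prefix o_0 s_0 ... o_n is
   m_n, where m_{i+1} = alpha_u(m_i, o_i) (Eve) or alpha_u(m_i, o_i, s_i) (Adam). *)
Definition finite_memoryE (l : stratE) : Prop :=
  exists (M : finType) (m0 : M) (au : M -> {set Q} -> M) (ao : M -> {set Q} -> Sig),
    forall h, is_pref h ->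
      l h = ao (foldl (fun m p => au m p.1) m0 h.1) h.2.

Definition finite_memoryA (l : stratA) : Prop :=
  exists (M : finType) (m0 : M) (au : M -> {set Q} -> Sig -> M)
         (ao : M -> {set Q} -> Sig -> {set Q}),
    forall h s, is_pref h ->
      l h s = ao (foldl (fun m p => au m p.1 p.2) m0 h.1) h.2 s.

Definition Eve_wins_fm : Prop :=
  exists l : stratE, finite_memoryE l /\ winningE l.

Definition Adam_wins_fm : Prop :=
  exists l : stratA, valid_stratA l /\ finite_memoryA l /\ winningA l.

Inductive val := Bot | Inf | Fin of int.

Definition isBot (v : val) : bool := if v is Bot then true else false.

Definition vadd (v : val) (k : int) : val :=
  match v with Fin a => Fin (a + k) | Inf => Inf | Bot => Bot end.

Definition vle (u v : val) : Prop :=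
  match u, v with
  | Fin a, Fin b => (a <= b)%R
  | Fin _, Inf => True
  | Inf, Inf => True
  | _, _ => False
  end.

Definition fn := Q -> val.

Definition supp (f : fn) : {set Q} := [set q | ~~ isBot (f q)].

Definition is_min_pred (f : fn) (s : Sig) (q : Q) (v : val) : Prop :=
  (exists q', [/\ q' \in supp f, Delta q' s q & v = vadd (f q') (w q' s q)]) /\
  (forall q', q' \in supp f -> Delta q' s q -> vle v (vadd (f q') (w q' s q))).

Definition successor (f : fn) (s : Sig) (f' : fn) : Prop :=
  [/\ supp f' \in Obs G,
      supp f' \subset post s (supp f) &
      forall q, q \in supp f' -> is_min_pred f s q (f' q) \/ f' q = Inf].

Definition preceq (k : int) (f f' : fn) : Prop :=
  supp f = supp f' /\ forall q, q \in supp f -> vle (vadd (f q) k) (f' q).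

Definition fI : fn := fun q => if q == qI G then Fin 0 else Bot.

(* A sequence f_0 s_0 f_1 ... s_{n-1} f_n: list of the (f_i, s_i), i < n,
   and the last function f_n. *)
Definition gseq := (seq (fn * Sig) * fn)%type.

Definition glen (x : gseq) : nat := size x.1.
Definition gf (x : gseq) (i : nat) : fn := nth x.2 (map fst x.1) i.
Definition ga (x : gseq) (i : nat) (d : Sig) : Sig := nth d (map snd x.1) i.

Definition ext (x : gseq) (s : Sig) (f : fn) : gseq := (rcons x.1 (x.2, s), f).

Definition ginit : gseq := ([::], fI).

Definition in_Pi (x : gseq) : Prop :=
  (forall q, gf x 0 q = fI q) /\
  (forall i (d : Sig), (i < glen x)%N -> successor (gf x i) (ga x i d) (gf x i.+1)) /\
  (forall i j, (i < j)%N -> (j < glen x)%N ->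
     ~ preceq 0 (gf x i) (gf x j) /\ ~ preceq 1 (gf x j) (gf x i)).

Definition T_E (x : gseq) : Prop :=
  in_Pi x /\ exists2 i, (i < glen x)%N & preceq 0 (gf x i) (gf x (glen x)).

Definition T_A (x : gseq) : Prop :=
  in_Pi x /\ exists2 i, (i < glen x)%N &
     preceq 1 (gf x (glen x)) (gf x i) /\
     exists2 q, q \in supp (gf x i) & gf x i q <> Inf.

Definition terminal (x : gseq) : Prop := T_E x \/ T_A x.

(* Strategies in Gamma_G: the current sequence encodes the whole history. *)
Definition gstratE := gseq -> Sig.
Definition gstratA := gseq -> Sig -> fn.

(* Plays of Gamma_G as infinite sequences of positions; once a terminal
   position is reached the game stops (the position is repeated). *)
Definition gconsistentE (l : gstratE) (X : nat -> gseq) : Prop :=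
  X 0%N = ginit /\
  forall k, (terminal (X k) -> X k.+1 = X k) /\
            (~ terminal (X k) ->
               exists f, X k.+1 = ext (X k) (l (X k)) f /\ in_Pi (X k.+1)).

Definition gconsistentA (l : gstratA) (X : nat -> gseq) : Prop :=
  X 0%N = ginit /\
  forall k, (terminal (X k) -> X k.+1 = X k) /\
            (~ terminal (X k) ->
               exists s, X k.+1 = ext (X k) s (l (X k) s)).

Definition gwinningE (l : gstratE) : Prop :=
  forall X, gconsistentE l X -> exists k, T_E (X k).

Definition gwinningA (l : gstratA) : Prop :=
  forall X, gconsistentA l X -> (forall k, in_Pi (X k)) /\ exists k, T_A (X k).

Definition Eve_wins_Gamma : Prop := exists l, gwinningE l.
Definition Adam_wins_Gamma : Prop := exists l, gwinningA l.

End MPG.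

(* Main.v *)
Require Import Defs.
From HB Require Import structures.
From mathcomp Require Import all_boot all_order all_algebra.
From mathcomp Require Import boolp classical_sets reals ereal topology sequences.
From mathcomp Require Import Rstruct.
From mathcomp Require Import lra normedtype zify.
From Stdlib Require ClassicalEpsilon Classical_Prop Classical_Pred_Type.

Set Implicit Arguments.
Unset Strict Implicit.
Unset Printing Implicit Defensive.

Import Order.TTheory GRing.Theory Num.Theory.


Lemma uniform_bound (T : finType) (Qp : T -> nat -> Prop) :
  (forall x m n, (m <= n)%N -> Qp x m -> Qp x n) ->
  (forall x, exists n, Qp x n) -> exists N, forall x, Qp x N.
Proof.
move=> mono H.
suff: forall s : seq T, exists N, forall x, x \in s -> Qp x N.
  by move=> /(_ (enum T)) [N HN]; exists N => x; apply: HN; rewrite mem_enum.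
elim=> [|a s [N HN]]; first by exists 0%N.
have [n Hn] := H a; exists (maxn N n) => x; rewrite inE => /orP[/eqP->|xs].
  by apply: mono Hn; rewrite leq_maxr.
by apply: mono (HN x xs); rewrite leq_maxl.
Qed.

Lemma mkseqSr (T : Type) (f : nat -> T) n : mkseq f n.+1 = rcons (mkseq f n) (f n).
Proof. by rewrite /mkseq -addn1 iotaD map_cat /= cats1. Qed.

Section Koenig.
Variables (T : finType) (P : seq T -> Prop).
Hypothesis Ppre : forall l x, P (rcons l x) -> P l.

Lemma Ppre_cat a b : P (a ++ b) -> P a.
Proof.
elim/last_ind: b => [|b x IH]; first by rewrite cats0.
by rewrite -rcons_cat => /Ppre.
Qed.

Definition big_node l := forall n, exists l', size l' = n /\ P (l ++ l').

Lemma big_step l : big_node l -> exists x, big_node (rcons l x).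
Proof.
move=> Hb; apply: Classical_Prop.NNPP => Hn.
have H1 : forall x, exists n, forall l', size l' = n -> ~ P (rcons l x ++ l').
  move=> x; have := Classical_Pred_Type.not_ex_all_not _ _ Hn x.
  move=> /Classical_Pred_Type.not_all_ex_not [n Hn2]; exists n => l' Hs HP; apply: Hn2.
  by exists l'.
have mono : forall x m n, (m <= n)%N ->
    (forall l', size l' = m -> ~ P (rcons l x ++ l')) ->
    (forall l', size l' = n -> ~ P (rcons l x ++ l')).
  move=> x m n mn Hm l' Hs HP; apply: (Hm (take m l')); first by rewrite size_take Hs; case: ltngtP mn.
  by move: HP; rewrite -{1}(cat_take_drop m l') catA => /Ppre_cat.
have [N HN] := uniform_bound mono H1.
have [l' [Hs HP]] := Hb N.+1.
case: l' Hs HP => [//|y l''] [Hs]; rewrite -cat_rcons => HP.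
exact: (HN y l'' Hs HP).
Qed.

Hypothesis Hall : forall n, exists l, size l = n /\ P l.

Lemma koenig : exists f : nat -> T, forall n, P (mkseq f n).
Proof.
have b0 : big_node [::] by move=> n; have [l [Hs HP]] := Hall n; exists l.
have [x0 _] := big_step b0.
pose nx l := ClassicalEpsilon.epsilon (inhabits x0) (fun x => big_node (rcons l x)).
pose fix sq n := if n is n'.+1 then rcons (sq n') (nx (sq n')) else [::].
exists (fun n => nx (sq n)).
have Hb : forall n, big_node (sq n).
  elim=> [//|n IH] /=; apply: (ClassicalEpsilon.epsilon_spec (inhabits x0) (fun x => big_node (rcons (sq n) x))).
  exact: big_step.
have Hsq : forall n, sq n = mkseq (fun n => nx (sq n)) n.
  by elim=> [//|n IH]; rewrite mkseqSr -IH.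
move=> n; rewrite -Hsq; have [l' [Hs HP]] := Hb n 0%N.
by move: HP; rewrite (size0nil Hs) cats0.
Qed.
End Koenig.


Section Basics.
Variable G : mpg.
Hypothesis HG : wf_mpg G.
Local Notation Q := (St G).
Local Notation Sig := (Act G).

Lemma HGtot (q : Q) (s : Sig) : exists q', Delta q s q'.
Proof. by case: HG => H _; exact: H. Qed.

Lemma HGpart : finset.partition (Obs G) [set: Q].
Proof. by case: HG => _ []. Qed.

Lemma obs_nonempty (o : {set Q}) : o \in Obs G -> exists q, q \in o.
Proof.
move=> Ho; have := HGpart; rewrite /finset.partition => /and3P[_ _ H0].
case: (set_0Vmem o) => [E|[q Hq]]; last by exists q.
by move: H0; rewrite -E Ho.
Qed.

Lemma obs_of (q : Q) : exists2 o, o \in Obs G & q \in o.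
Proof.
have := HGpart; rewrite /finset.partition => /and3P[/eqP Hc _ _].
have : q \in finset.cover (Obs G) by rewrite Hc inE.
by rewrite /finset.cover => /bigcupP[o Ho Hq]; exists o.
Qed.

Lemma obs_uniq (o1 o2 : {set Q}) (q : Q) : o1 \in Obs G -> o2 \in Obs G -> q \in o1 -> q \in o2 -> o1 = o2.
Proof.
move=> H1 H2 q1 q2; have := HGpart; rewrite /finset.partition => /and3P[_ /finset.trivIsetP Ht _].
apply/eqP; apply: contraT => Hne; have := Ht _ _ H1 H2 Hne.
rewrite -setI_eq0 => /eqP E; have : q \in o1 :&: o2 by rewrite inE q1 q2.
by rewrite E inE.
Qed.

Lemma post_sub (o o' : {set Q}) (s : Sig) (q : Q) : o \in Obs G -> o' \in Obs G -> q \in o' -> q \in post s o ->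
  o' \subset post s o.
Proof.
move=> Ho Ho' qo' qp; case: HG => _ [_ [_ Hu]]; have [U UO E] := Hu o s Ho.
move: qp; rewrite E /finset.cover => /bigcupP[u Hu' qu].
have uo : u \in Obs G by move/fintype.subsetP: UO; apply.
have -> : o' = u by apply: obs_uniq qo' qu.
by apply/fintype.subsetP => x xu; apply/bigcupP; exists u.
Qed.

Lemma valid_exists (o : {set Q}) (s : Sig) : o \in Obs G -> exists2 o', o' \in Obs G & o' \subset post s o.
Proof.
move=> Ho; have [q qo] := obs_nonempty Ho; have [q' Hq'] := HGtot q s.
have [o' Ho' q'o'] := obs_of q'; exists o' => //.
apply: (post_sub Ho Ho' q'o'); rewrite inE; apply/existsP; exists q; rewrite qo.
exact: Hq'.
Qed.

Definition wb : int := \sum_(x : Q * Sig * Q) `|w x.1.1 x.1.2 x.2|%:Z.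

Lemma wb_bound (q : Q) (s : Sig) (q' : Q) : (- wb <= w q s q' <= wb)%R.
Proof.
have H : (`|w q s q'|%:Z <= wb)%R.
  rewrite /wb (bigD1 (q, s, q')) //= lerDl; by apply: sumr_ge0 => i _.
move: H; rewrite abszE => H; rewrite -ler_norml; exact: H.
Qed.

Lemma wb_ge0 : (0 <= wb)%R.
Proof. by rewrite /wb; apply: sumr_ge0 => i _. Qed.

Definition vmin (u v : Defs.val) : Defs.val :=
  match u, v with
  | Bot, _ => v
  | _, Bot => u
  | Inf, _ => v
  | _, Inf => u
  | Fin a, Fin b => Fin (Num.min a b)
  end.

Lemma vle_refl v : v <> Bot -> vle v v.
Proof. by case: v => //= a. Qed.

Lemma vle_trans u v t : vle u v -> vle v t -> vle u t.
Proof. by case: u => [||a]; case: v => [||b]; case: t => [||c] //=; apply: le_trans. Qed.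

Lemma vmin_le_l u v : u <> Bot -> v <> Bot -> vle (vmin u v) u.
Proof. by case: u => [||a]; case: v => [||b] //= _ _; rewrite ge_min lexx. Qed.

Lemma vmin_le_r u v : u <> Bot -> v <> Bot -> vle (vmin u v) v.
Proof. by case: u => [||a]; case: v => [||b] //= _ _; rewrite ge_min lexx orbT. Qed.

Lemma vmin_cases u v : vmin u v = u \/ vmin u v = v.
Proof.
case: u => [||a]; case: v => [||b] /=; try by [left|right].
by rewrite /Num.min; case: ifP; [left|right].
Qed.

Definition qual (f : fn G) (s : Sig) (q q' : Q) := (q' \in supp f) && Delta q' s q.
Definition qval (f : fn G) (s : Sig) (q q' : Q) := vadd (f q') (w q' s q).

Lemma qval_nBot (f : fn G) (s : Sig) (q q' : Q) : q' \in supp f -> qval f s q q' <> Bot.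
Proof. by rewrite /qval inE; case: (f q'). Qed.

Definition minv (f : fn G) (s : Sig) (q : Q) : Defs.val :=
  foldr (fun q' acc => if qual f s q q' then vmin (qval f s q q') acc else acc) Bot (enum Q).

Lemma minv_spec_r (f : fn G) (s : Sig) (q : Q) (r : seq Q) :
  let m := foldr (fun q' acc => if qual f s q q' then vmin (qval f s q q') acc else acc) Bot r in
  (m = Bot /\ forall q', q' \in r -> ~~ qual f s q q') \/
  ((exists2 q', q' \in r & qual f s q q' /\ m = qval f s q q') /\
   forall q', q' \in r -> qual f s q q' -> vle m (qval f s q q')).
Proof.
elim: r => [|a r IH] /=; first by left.
case Ha: (qual f s q a); last first.
  case: IH => [[-> H]|[[q' q'r H1] H2]].
    by left; split => // q'; rewrite inE => /orP[/eqP->|/H]; rewrite ?Ha.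
  right; split; first by exists q' => //; rewrite inE q'r orbT.
  by move=> q''; rewrite inE => /orP[/eqP->|/H2 //]; rewrite Ha.
have Hab : qval f s q a <> Bot by apply: qval_nBot; case/andP: Ha.
case: IH => [[-> H]|[[q' q'r [H1q H1]] H2]].
  right; split; first by exists a; rewrite ?inE ?eqxx //; split => //; case: (qval f s q a) Hab.
  move=> q'; rewrite inE => /orP[/eqP->|/H /negP Hn Hq]; last by [].
  by move=> _; case: (qval f s q a) Hab => //= b _; rewrite lexx.
have Hb : qval f s q q' <> Bot by apply: qval_nBot; case/andP: H1q.
right; split.
  case: (vmin_cases (qval f s q a) (qval f s q q')) => E; rewrite H1 E.
    by exists a; rewrite ?inE ?eqxx.
  by exists q'; rewrite ?inE ?q'r ?orbT.
move=> q''; rewrite inE H1 => /orP[/eqP-> _|q''r Hq''].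
  exact: vmin_le_l.
apply: vle_trans (vmin_le_r Hab Hb) _; rewrite -H1; exact: H2.
Qed.

Lemma minv_spec (f : fn G) (s : Sig) (q : Q) :
  (minv f s q = Bot /\ forall q', ~~ qual f s q q') \/
  ((exists q', qual f s q q' /\ minv f s q = qval f s q q') /\
   forall q', qual f s q q' -> vle (minv f s q) (qval f s q q')).
Proof.
case: (minv_spec_r f s q (enum Q)) => [[H1 H2]|[[q' _ H1] H2]].
  by left; split => // q'; apply: H2; rewrite mem_enum.
by right; split; [exists q'|move=> q2; apply: H2; rewrite mem_enum].
Qed.

Definition succE (f : fn G) (s : Sig) (o : {set Q}) : fn G :=
  fun q => if q \in o then minv f s q else Bot.

Lemma succE_supp (f : fn G) (s : Sig) (o : {set Q}) : o \subset post s (supp f) -> supp (succE f s o) = o.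
Proof.
move=> Hsub; apply/setP => q; rewrite inE /succE; case: ifP => // qo /=.
have := fintype.subsetP Hsub q qo; rewrite inE => /existsP[q' /andP[q'f Dq']].
case: (minv_spec f s q) => [[_ H]|[[q'' [Hq E]] _]].
  by have := H q'; rewrite /qual q'f Dq'.
by rewrite E; case/andP: Hq => Hq _; have := @qval_nBot f s q q'' Hq; case: (qval _ _ _ _).
Qed.

Lemma succE_successor (f : fn G) (s : Sig) (o : {set Q}) : o \in Obs G -> o \subset post s (supp f) ->
  successor f s (succE f s o).
Proof.
move=> Ho Hsub; split; rewrite (succE_supp Hsub) //.
move=> q qo; left; rewrite /succE qo.
have := fintype.subsetP Hsub q qo; rewrite inE => /existsP[q' /andP[q'f Dq']].
case: (minv_spec f s q) => [[_ H]|[[q'' [Hq E]] H2]].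
  by have := H q'; rewrite /qual q'f Dq'.
split; first by exists q''; case/andP: Hq => -> ->.
by move=> q1 H1 H1'; apply: H2; rewrite /qual H1 H1'.
Qed.

Lemma glen_ext (x : gseq G) (s : Sig) (f : fn G) : glen (ext x s f) = (glen x).+1.
Proof. by rewrite /glen /ext size_rcons. Qed.

Lemma gf_last (x : gseq G) : gf x (glen x) = x.2.
Proof. by rewrite /gf nth_default // size_map. Qed.

Lemma gf_ext (x : gseq G) (s : Sig) (f : fn G) i : (i <= glen x)%N -> gf (ext x s f) i = gf x i.
Proof.
rewrite /gf /ext /glen /= map_rcons nth_rcons size_map leq_eqVlt => /orP[/eqP->|Hi].
  by rewrite ltnn eqxx nth_default ?size_map.
by rewrite Hi; apply: set_nth_default; rewrite size_map.
Qed.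

Lemma gf_ext_last (x : gseq G) (s : Sig) (f : fn G) : gf (ext x s f) (glen x).+1 = f.
Proof. by rewrite -(glen_ext x s f) gf_last. Qed.

Lemma ga_ext (x : gseq G) (s : Sig) (f : fn G) i d : ga (ext x s f) i d = if (i < glen x)%N then ga x i d else if i == glen x then s else d.
Proof. by rewrite /ga /ext /= map_rcons nth_rcons size_map. Qed.

Lemma in_Pi_ext (x : gseq G) (s : Sig) (f : fn G) :
  in_Pi x -> ~ T_E x -> ~ T_A x -> successor x.2 s f ->
  (forall i, (i < glen x)%N -> exists2 q, q \in supp (gf x i) & gf x i q <> Inf) ->
  in_Pi (ext x s f).
Proof.
move=> [H0 [Hs Hc]] nE nA Hsf Hfin; split; [|split].
- by move=> q; rewrite gf_ext.
- move=> i d; rewrite glen_ext ltnS leq_eqVlt => /orP[/eqP->|Hi].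
    rewrite gf_ext // gf_last gf_ext_last.
    by have -> : ga (ext x s f) (glen x) d = s by rewrite /ga /ext /= map_rcons nth_rcons size_map ltnn eqxx.
  rewrite !gf_ext ?(ltnW Hi) //; have -> : ga (ext x s f) i d = ga x i d by rewrite /ga /ext /= map_rcons nth_rcons size_map Hi.
  exact: Hs.
- move=> i j ij; rewrite glen_ext ltnS leq_eqVlt => /orP[/eqP Ej|Hj].
    subst j; rewrite !gf_ext ?(ltnW ij) // gf_last; split.
      by move=> Hp; apply: nE; split; [split; [|split]|exists i; rewrite ?gf_last].
    move=> Hp; apply: nA; split; [by split; [|split]|exists i => //]; split; first by rewrite gf_last.
    exact: Hfin.
  by rewrite !gf_ext ?(ltnW Hj) ?(ltnW (ltn_trans ij Hj)) //; apply: Hc.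
Qed.

End Basics.


Local Notation RR := Rdefinitions.R.

Definition avgseq (u : nat -> int) : nat -> \bar RR :=
  fun n => (((u n)%:~R / n%:R : RR)%:E).

Lemma MP_ge0 (u : nat -> int) (C : int) :
  (0 <= C)%R -> (forall n, (- C <= u n)%R) -> (0 <= limn_einf (avgseq u))%E.
Proof.
move=> C0 Hu.
rewrite limn_einf_lim (cvg_lim _ (@cvg_einfs_sup _ (avgseq u))) //.
apply/lee_addgt0Pr => e e0.
pose N := (Num.Def.archi_bound ((C%:~R : RR) / e)).+1.
have HN : ((C%:~R : RR) < N%:R * e)%R.
  have H1 : (0 <= (C%:~R : RR) / e)%R by rewrite divr_ge0 ?ler0z // ltW.
  have := archi_boundP H1; rewrite ltr_pdivrMr // => H2.
  apply: lt_le_trans H2 _; rewrite ler_pM2r // ler_nat /N //.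
have H : ((- e)%:E <= einfs (avgseq u) N)%E.
  apply: le_ereal_inf_tmp => _ [k /= Nk <-]; rewrite /avgseq lee_fin.
  have k0 : (0 < k%:R :> RR)%R by rewrite ltr0n (leq_trans _ Nk).
  rewrite ler_pdivlMr //.
  have Hk : (N%:R <= k%:R :> RR)%R by rewrite ler_nat.
  have Huk : (- (C%:~R : RR) <= (u k)%:~R)%R by rewrite -mulrNz ler_int.
  nra.
have H2 : (einfs (avgseq u) N <= ereal_sup (range (einfs (avgseq u))))%E.
  by apply: ereal_sup_ubound; exists N.
have := leeD2r e%:E (le_trans H H2); rewrite -EFinD addNr //.
Qed.

Lemma MP_lt0 (u : nat -> int) (A : int) (D : nat) :
  (0 < D)%N -> (forall n, (u n * D%:Z + n%:Z <= A)%R) -> ~ (0 <= limn_einf (avgseq u))%E.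
Proof.
move=> D0 Hu H0.
pose Ar : RR := (`|(A%:~R : RR)|)%R.
pose N := (Num.Def.archi_bound (2 * Ar)%R).+1.
have HN : (2 * Ar < N%:R :> RR)%R.
  have := @archi_boundP _ (2 * Ar); rewrite mulr_ge0 ?normr_ge0 // => /(_ isT) H.
  by apply: lt_le_trans H _; rewrite ler_nat /N.
have d0 : (0 < D%:R :> RR)%R by rewrite ltr0n.
pose e : RR := ((2 * D%:R)^-1)%R.
have e0 : (0 < e)%R by rewrite invr_gt0 mulr_gt0.
have de : (2 * D%:R * e = 1 :> RR)%R by rewrite mulfV // mulf_neq0 // ?pnatr_eq0 // gt_eqF.
have H : (esups (avgseq u) N <= (- e)%:E)%E.
  apply: ge_ereal_sup => _ [k /= Nk <-]; rewrite /avgseq lee_fin.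
  have k0 : (0 < k%:R :> RR)%R by rewrite ltr0n (leq_trans _ Nk).
  rewrite ler_pdivrMr //.
  have Hk : (N%:R <= k%:R :> RR)%R by rewrite ler_nat.
  have Huk : ((u k)%:~R * D%:R + k%:R <= (A%:~R : RR))%R.
    by have := Hu k; rewrite -(ler_int RR) intrD intrM.
  have HA : ((A%:~R : RR) <= Ar)%R by apply: ler_norm.
  nra.
have H1 : (limn_einf (avgseq u) <= esups (avgseq u) N)%E.
  apply: le_trans (limn_einf_sup _) _.
  rewrite limn_esup_lim (cvg_lim _ (@cvg_esups_inf _ (avgseq u))) //.
  by apply: ereal_inf_lbound; exists N.
have := le_trans H0 (le_trans H1 H); rewrite lee_fin oppr_ge0 => /(lt_le_trans e0).
by rewrite ltxx.
Qed.


Section Eve.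
Variable G : mpg.
Hypothesis HG : wf_mpg G.
Local Notation Q := (St G).
Local Notation Sig := (Act G).
Variable lE : gstratE G.
Hypothesis HlE : gwinningE lE.

Definition validb (x : gseq G) (s : Sig) (o : {set Q}) :=
  (o \in Obs G) && (o \subset post s (supp x.2)).
Definition chooseo (x : gseq G) (s : Sig) (o : {set Q}) :=
  if validb x s o then o else odflt finset.set0 [pick o' | validb x s o'].
Definition stepE (x : gseq G) (o : {set Q}) : gseq G :=
  ext x (lE x) (succE x.2 (lE x) (chooseo x (lE x) o)).
Definition gposE (L : seq {set Q}) := foldl stepE (ginit G) L.

Lemma chooseo_valid x s o : supp x.2 \in Obs G -> validb x s (chooseo x s o).
Proof.
rewrite /chooseo; case: ifP => // _ Hs; case: pickP => [o' //|H].
have [o' H1 H2] := valid_exists HG s Hs.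
by have := H o'; rewrite /validb H1 H2.
Qed.

Definition InvE (x : gseq G) := forall i, (i <= glen x)%N ->
  supp (gf x i) \in Obs G /\
  forall q, q \in supp (gf x i) -> exists a, gf x i q = Fin a /\ (- (i%:Z * wb G) <= a)%R.

Lemma supp_fI : supp (@fI G) = [set qI G].
Proof. by apply/setP => q; rewrite !inE /fI; case: eqP. Qed.

Lemma InvE_init : InvE (ginit G).
Proof.
move=> i; rewrite /glen /= leqn0 => /eqP ->; rewrite /gf /= supp_fI; split.
  by case: HG => _ [_ []].
by move=> q; rewrite inE /fI => /eqP ->; rewrite eqxx; exists 0%R; rewrite mul0r oppr0.
Qed.

Lemma InvE_step x o : InvE x -> InvE (stepE x o).
Proof.
move=> Hx i; rewrite /stepE glen_ext leq_eqVlt => /orP[/eqP->|Hi]; last first.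
  by rewrite ltnS in Hi; rewrite gf_ext //; apply: Hx.
rewrite gf_ext_last; have [Hs Hv] := Hx _ (leqnn _); rewrite gf_last in Hs Hv.
have /andP[Ho Hsub] := chooseo_valid (lE x) o Hs.
rewrite (succE_supp Hsub); split => // q qo.
rewrite /succE qo; case: (minv_spec x.2 (lE x) q) => [[_ H]|[[q'' [Hq E]] _]].
  have := fintype.subsetP Hsub q qo; rewrite inE => /existsP[q' /andP[q'f Dq']].
  by have := H q'; rewrite /qual q'f Dq'.
rewrite E /qval; case/andP: Hq => Hq _; have [b [Eb Hb]] := Hv _ Hq; rewrite Eb /=.
exists (b + w q'' (lE x) q)%R; split => //.
have [Hw _] := andP (wb_bound q'' (lE x) q).
rewrite -[(glen x).+1]addn1 PoszD mulrDl mul1r opprD; exact: lerD.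
Qed.

Lemma gposE_rcons L o : gposE (rcons L o) = stepE (gposE L) o.
Proof. by rewrite /gposE foldl_rcons. Qed.

Lemma glen_gposE L : glen (gposE L) = size L.
Proof.
elim/last_ind: L => [//|L o IH]; by rewrite gposE_rcons /stepE glen_ext IH size_rcons.
Qed.

Lemma take_rcons_le (T : Type) (L : seq T) o j : (j <= size L)%N -> take j (rcons L o) = take j L.
Proof. by move=> Hj; rewrite -cats1 takel_cat. Qed.

Lemma gf_gposE L i : (i <= size L)%N -> gf (gposE L) i = (gposE (take i L)).2.
Proof.
elim/last_ind: L i => [|L o IH] i Hi.
  by move: Hi; rewrite leqn0 => /eqP->.
move: Hi; rewrite size_rcons leq_eqVlt => /orP[/eqP->|Hi].
  by rewrite take_oversize ?size_rcons // -[(size L).+1](size_rcons L o) -(glen_gposE (rcons L o)) gf_last.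
rewrite ltnS in Hi; rewrite take_rcons_le // gposE_rcons /stepE gf_ext ?glen_gposE //.
exact: IH.
Qed.

Lemma InvE_gposE L : InvE (gposE L).
Proof.
elim/last_ind: L => [|L o IH]; first exact: InvE_init.
by rewrite gposE_rcons; apply: InvE_step.
Qed.

Lemma in_Pi_init : in_Pi (ginit G).
Proof. by split => //; split. Qed.

Lemma step_ok x o : in_Pi x -> InvE x -> ~ terminal x -> in_Pi (stepE x o).
Proof.
move=> HP HI HT; have [Hs _] := HI _ (leqnn _); rewrite gf_last in Hs.
have /andP[Ho Hsub] := chooseo_valid (lE x) o Hs.
apply: in_Pi_ext => //.
- by move=> H; apply: HT; left.
- by move=> H; apply: HT; right.
- exact: succE_successor.
move=> i Hi; have [Hsi Hv] := HI _ (ltnW Hi).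
have [q qo] := obs_nonempty HG Hsi; exists q => //.
by have [a [-> _]] := Hv q qo.
Qed.

Fixpoint runE (c : nat -> {set Q}) (k : nat) : gseq G :=
  if k is k'.+1 then
    (if pselect (terminal (runE c k')) then runE c k' else stepE (runE c k') (c k'))
  else ginit G.

Lemma runE_inv c k : in_Pi (runE c k) /\ InvE (runE c k).
Proof.
elim: k => [|k [IH1 IH2]] /=; first by split; [exact: in_Pi_init|exact: InvE_init].
case: pselect => // HT; split; [exact: step_ok|exact: InvE_step].
Qed.

Lemma runE_cons c : gconsistentE lE (runE c).
Proof.
split => // k; split => HT /=.
  by case: (pselect (terminal (runE c k))).
have -> : is_left (pselect (terminal (runE c k))) = false by case: pselect.
exists (succE (runE c k).2 (lE (runE c k)) (chooseo (runE c k) (lE (runE c k)) (c k))).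
split => //; have [H1 H2] := runE_inv c k; exact: step_ok.
Qed.

Lemma runE_pos c k : runE c k = gposE (mkseq c k) \/ exists j, terminal (gposE (mkseq c j)).
Proof.
elim: k => [|k [IH|IH]] /=; [by left| |by right].
case: pselect => HT /=; first by right; exists k; rewrite -IH.
by left; rewrite IH mkseqSr gposE_rcons.
Qed.

Lemma term_reach c : exists k, terminal (gposE (mkseq c k)).
Proof.
have [k Hk] := HlE (runE_cons c).
by case: (runE_pos c k) => [E|//]; exists k; left; rewrite -E.
Qed.

Definition goodE (L : seq {set Q}) := forall j, (j <= size L)%N -> ~ terminal (gposE (take j L)).

Lemma goodE_pre L o : goodE (rcons L o) -> goodE L.
Proof.
move=> H j Hj; rewrite -(take_rcons_le o Hj); apply: H.
by rewrite size_rcons (leq_trans Hj).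
Qed.

Lemma depthE : exists D, forall L, goodE L -> (size L < D)%N.
Proof.
case: (Classical_Prop.classic (forall n, exists L, size L = n /\ goodE L)) => [H|H].
  have [f Hf] := koenig goodE_pre H.
  have [k Hk] := term_reach f.
  by have := Hf k k; rewrite size_mkseq take_oversize ?size_mkseq // => /(_ (leqnn _)).
have [n Hn] := Classical_Pred_Type.not_all_ex_not _ _ H.
exists n => L HL; rewrite ltnNge; apply/negP => Hs; apply: Hn.
exists (take n L); split; first by rewrite size_take_min; apply/minn_idPl.
move=> j; rewrite size_take_min => Hj; rewrite take_takel; last exact: (leq_trans Hj (geq_minl _ _)).
apply: HL; exact: (leq_trans Hj (geq_minr _ _)).
Qed.

Lemma first_TE L : (forall j, (j < size L)%N -> ~ terminal (gposE (take j L))) ->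
  terminal (gposE L) -> T_E (gposE L).
Proof.
move=> Hg HT; pose c := fun k => nth finset.set0 L k.
have Hr : forall k, runE c k = gposE (take k L).
  elim=> [|k IH] /=; first by rewrite take0.
  case: pselect => HT' /=.
    case: (ltnP k (size L)) => Hk; first by exfalso; apply: (Hg k Hk); rewrite -IH.
    by rewrite IH !take_oversize // ltnW.
  case: (ltnP k (size L)) => Hk; last by exfalso; apply: HT'; rewrite IH take_oversize.
  by rewrite IH (take_nth finset.set0 Hk) gposE_rcons.
have [k Hk] := HlE (runE_cons c); rewrite Hr in Hk.
case: (ltnP k (size L)) => Hkl; last by rewrite take_oversize in Hk.
by exfalso; apply: (Hg k Hkl); left.
Qed.

Definition idxE (x : gseq G) : nat :=
  ClassicalEpsilon.epsilon (inhabits 0%N) (fun i => (i < glen x)%N /\ preceq 0 (gf x i) x.2).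

Lemma idxE_spec x : T_E x -> (idxE x < glen x)%N /\ preceq 0 (gf x (idxE x)) x.2.
Proof.
move=> [_ [i Hi Hp]]; apply: (ClassicalEpsilon.epsilon_spec (inhabits 0%N) (fun i => (i < glen x)%N /\ preceq 0 (gf x i) x.2)).
by exists i; rewrite -(gf_last x).
Qed.

Definition normE (L : seq {set Q}) :=
  if pselect (terminal (gposE L)) then take (idxE (gposE L)) L else L.

End Eve.


Lemma take_mkseq' (T : Type) (f : nat -> T) m n : (m <= n)%N -> take m (mkseq f n) = mkseq f m.
Proof.
by move=> H; rewrite /mkseq -(subnKC H) iotaD map_cat take_size_cat // size_map size_iota.
Qed.

Lemma not_terminal_init (G : mpg) : ~ terminal (ginit G).
Proof. by case=> [[_ [i]]|[_ [i]]]. Qed.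

Section EveMem.
Variable G : mpg.
Hypothesis HG : wf_mpg G.
Local Notation Q := (St G).
Local Notation Sig := (Act G).
Variable lE : gstratE G.
Hypothesis HlE : gwinningE lE.
Variable D : nat.
Hypothesis HD : forall L, goodE lE L -> (size L < D)%N.

Definition MemE := option ('I_D.+1 * {ffun 'I_D -> {set Q}}).
Definition encE (L : seq {set Q}) : MemE :=
  Some (inord (size L), [ffun i : 'I_D => nth finset.set0 L i]).
Definition decE (m : MemE) : seq {set Q} :=
  if m is Some p then take p.1 [seq p.2 i | i <- enum 'I_D] else [::].
Definition auE (m : MemE) (o : {set Q}) : MemE :=
  if m is Some _ then encE (normE lE (rcons (decE m) o)) else encE [::].
Definition aoE (m : MemE) (o : {set Q}) : Sig := lE (gposE lE (decE (auE m o))).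
Definition lGE (h : hist G) : Sig := aoE (foldl (fun m p => auE m p.1) None h.1) h.2.

Lemma decE_enc L : (size L <= D)%N -> decE (encE L) = L.
Proof.
move=> HL; rewrite /decE /encE /= inordK ?ltnS //.
have -> : [seq [ffun i : 'I_D => nth finset.set0 L i] i | i <- enum 'I_D] =
          mkseq (nth finset.set0 L) D.
  by rewrite /mkseq -val_enum_ord -map_comp; apply: eq_map => i; rewrite ffunE.
by rewrite take_mkseq' // mkseq_nth.
Qed.

Lemma lGE_fm : finite_memoryE lGE.
Proof. by exists MemE, None, auE, aoE. Qed.

Definition Wsum (s : nat -> Sig) (q : nat -> Q) (k : nat) : int :=
  \sum_(i < k) w (q i) (s i) (q i.+1).

Lemma lGE_win : winningE lGE.
Proof.
move=> o s Hp Hc.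
have [Ho0 [HoO Hot]] := Hp.
pose mem k := foldl (fun m p => auE m p.1) None (hist_of o s k).1.
have Eh : forall k, (hist_of o s k).1 = mkseq (fun i => (o i, s i)) k by [].
have memS : forall k, mem k.+1 = auE (mem k) (o k).
  by move=> k; rewrite /mem Eh mkseqSr foldl_rcons -Eh.
have hs : forall k, s k = lE (gposE lE (decE (mem k.+1))).
  by move=> k; rewrite memS (Hc k).
have Inv : forall k, exists L, [/\ mem k.+1 = encE L, goodE lE L, supp (gposE lE L).2 = o k &
    forall q, is_concrete o s q -> exists a, (gposE lE L).2 (q k) = Fin a /\ (a <= Wsum s q k)%R].
  elim=> [|k [L [HmL HgL HsL HqL]]].
    exists [::]; split.
    - by rewrite memS.
    - by move=> j; rewrite leqn0 => /eqP->; exact: not_terminal_init.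
    - by rewrite /= supp_fI Ho0.
    move=> q Hq; have [H0 _] := Hq 0%N; move: H0; rewrite Ho0 inE => /eqP->.
    by exists 0%R; rewrite /= /fI eqxx /Wsum big_ord0.
  have HLD : (size L <= D)%N := ltnW (HD HgL).
  have Hsk : s k = lE (gposE lE L) by rewrite hs HmL decE_enc.
  set x := gposE lE L.
  have Hx := InvE_gposE HG (lE := lE) (L := L).
  have [HxO Hxv] := Hx _ (leqnn _); rewrite gf_last -/x in HxO Hxv.
  have Hval : validb x (lE x) (o k.+1).
    apply/andP; split => //; have [q1 [q2 [q1o q2o Dq]]] := Hot k.
    rewrite HsL -Hsk; apply: (post_sub HG (HoO k) (HoO k.+1) q2o).
    by rewrite inE; apply/existsP; exists q1; rewrite q1o.
  set L' := rcons L (o k.+1).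
  set F' := succE x.2 (lE x) (o k.+1).
  have HsubF : o k.+1 \subset post (lE x) (supp x.2) by case/andP: Hval.
  have HpL' : gposE lE L' = ext x (lE x) F' by rewrite /L' gposE_rcons /stepE /chooseo Hval.
  have HF'last : (gposE lE L').2 = F' by rewrite HpL'.
  have HsF' : supp F' = o k.+1 by rewrite succE_supp.
  have Hx' := InvE_gposE HG (lE := lE) (L := L').
  have HqF' : forall q, is_concrete o s q -> exists a, F' (q k.+1) = Fin a /\ (a <= Wsum s q k.+1)%R.
    move=> q Hq; have [a [Ea Ha]] := HqL q Hq.
    have [qk1 _] := Hq k.+1; have [qk Dk] := Hq k.
    have [_ Hv'] := Hx' _ (leqnn _); rewrite gf_last HF'last HsF' in Hv'.
    have [a' [Ea' _]] := Hv' _ qk1; exists a'; split => //.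
    have Hqual : qual x.2 (lE x) (q k.+1) (q k) by rewrite /qual HsL qk -Hsk.
    move: Ea'; rewrite /F' /succE qk1.
    case: (minv_spec x.2 (lE x) (q k.+1)) => [[_ H]|[_ H]]; first by have := H (q k); rewrite Hqual.
    move=> Ea'; have := H _ Hqual; rewrite Ea' /qval -/x Ea /= -Hsk => Hle.
    by rewrite /Wsum big_ord_recr /=; apply: le_trans Hle _; rewrite lerD2r.
  have HgL'pre : forall j, (j <= size L)%N -> ~ terminal (gposE lE (take j L')).
    by move=> j Hj; rewrite /L' take_rcons_le //; apply: HgL.
  case: (pselect (terminal (gposE lE L'))) => HT.
    have HTE : T_E (gposE lE L').
      by apply: (first_TE HG HlE _ HT) => j; rewrite /L' size_rcons ltnS; exact: HgL'pre.
    have [Hi Hpre] := idxE_spec HTE.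
    set i := idxE (gposE lE L') in Hi Hpre *.
    rewrite glen_gposE /L' size_rcons ltnS in Hi.
    exists (take i L'); split.
    - rewrite memS HmL /auE decE_enc // /normE -/L'.
      by case: pselect.
    - move=> j; rewrite size_take_min leq_min => /andP[Hji _].
      rewrite take_takel // /L' take_rcons_le ?(leq_trans Hji) //.
      by apply: HgL; apply: leq_trans Hji Hi.
    - rewrite -gf_gposE ?size_rcons ?ltnS 1?ltnW //.
      by case: Hpre => -> _; rewrite HF'last.
    move=> q Hq; have [a' [Ea' Ha']] := HqF' q Hq.
    rewrite -gf_gposE ?size_rcons ?ltnS 1?ltnW //.
    have Hii : (i <= glen (gposE lE L'))%N by rewrite glen_gposE /L' size_rcons ltnW // ltnS.
    have [Hs1 Hv1] := Hx' i Hii.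
    case: Hpre => Hsup Hle.
    have qin : q k.+1 \in supp (gf (gposE lE L') i) by rewrite Hsup HF'last HsF'; case: (Hq k.+1).
    have [b [Eb _]] := Hv1 _ qin.
    exists b; split => //.
    by have := Hle _ qin; rewrite Eb HF'last Ea' /= addr0 => Hb; exact: le_trans Hb Ha'.
  exists L'; split.
  - rewrite memS HmL /auE decE_enc // /normE -/L'.
    by case: pselect.
  - move=> j; rewrite /L' size_rcons leq_eqVlt => /orP[/eqP->|Hj].
      by rewrite take_oversize ?size_rcons.
    by apply: HgL'pre.
  - by rewrite HF'last.
  - by move=> q Hq; rewrite HF'last; apply: HqF'.
move=> q Hq.
apply: (MP_ge0 (u := Wsum s q) (C := (D%:Z * wb G)%R)).
  by apply: mulr_ge0 => //; exact: wb_ge0.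
move=> n; have [L [_ HgL HsL HqL]] := Inv n; have [a [Ea Ha]] := HqL q Hq.
have [_ Hv] := InvE_gposE HG (lE := lE) (L := L) (leqnn _).
rewrite gf_last in Hv; have [qn _] := Hq n; rewrite -HsL in qn.
have [a'' [Ea'' Ha'']] := Hv _ qn; rewrite Ea in Ea''; case: Ea'' => <- in Ha''.
apply: le_trans Ha; apply: le_trans Ha''; rewrite lerN2 glen_gposE.
apply: ler_wpM2r; first exact: wb_ge0.
by rewrite lez_nat; apply: ltnW; apply: HD.
Qed.

End EveMem.

Lemma Eve_part (G : mpg) (HG : wf_mpg G) : Eve_wins_Gamma G -> Eve_wins_fm G.
Proof.
move=> [lE HlE]; have [D HD] := depthE HG HlE.
exists (lGE lE D); split; [exact: lGE_fm | exact (lGE_win HG HlE HD)].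
Qed.


Section Adam.
Variable G : mpg.
Hypothesis HG : wf_mpg G.
Local Notation Q := (St G).
Local Notation Sig := (Act G).
Variable lA : gstratA G.
Hypothesis HlA : gwinningA lA.
Variable s0 : Sig.

Definition stepA (x : gseq G) (s : Sig) : gseq G := ext x s (lA x s).
Definition gposA (L : seq Sig) := foldl stepA (ginit G) L.

Lemma gposA_rcons L s : gposA (rcons L s) = stepA (gposA L) s.
Proof. by rewrite /gposA foldl_rcons. Qed.

Lemma glen_gposA L : glen (gposA L) = size L.
Proof.
elim/last_ind: L => [//|L o IH]; by rewrite gposA_rcons /stepA glen_ext IH size_rcons.
Qed.

Lemma gf_gposA L i : (i <= size L)%N -> gf (gposA L) i = (gposA (take i L)).2.
Proof.
elim/last_ind: L i => [|L o IH] i Hi.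
  by move: Hi; rewrite leqn0 => /eqP->.
move: Hi; rewrite size_rcons leq_eqVlt => /orP[/eqP->|Hi].
  by rewrite take_oversize ?size_rcons // -[(size L).+1](size_rcons L o) -(glen_gposA (rcons L o)) gf_last.
rewrite ltnS in Hi; rewrite take_rcons_le // gposA_rcons /stepA gf_ext ?glen_gposA //.
exact: IH.
Qed.

Fixpoint runA (c : nat -> Sig) (k : nat) : gseq G :=
  if k is k'.+1 then
    (if pselect (terminal (runA c k')) then runA c k' else stepA (runA c k') (c k'))
  else ginit G.

Lemma runA_cons c : gconsistentA lA (runA c).
Proof.
split => // k; split => HT /=.
  by case: (pselect (terminal (runA c k))).
have -> : is_left (pselect (terminal (runA c k))) = false by case: pselect.
by exists (c k).
Qed.

Lemma runA_pos c k : runA c k = gposA (mkseq c k) \/ exists j, terminal (gposA (mkseq c j)).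
Proof.
elim: k => [|k [IH|IH]] /=; [by left| |by right].
case: pselect => HT /=; first by right; exists k; rewrite -IH.
by left; rewrite IH mkseqSr gposA_rcons.
Qed.

Lemma term_reachA c : exists k, terminal (gposA (mkseq c k)).
Proof.
have [_ [k Hk]] := HlA (runA_cons c).
by case: (runA_pos c k) => [E|//]; exists k; right; rewrite -E.
Qed.

Definition goodA (L : seq Sig) := forall j, (j <= size L)%N -> ~ terminal (gposA (take j L)).

Lemma goodA_pre L o : goodA (rcons L o) -> goodA L.
Proof.
move=> H j Hj; rewrite -(take_rcons_le o Hj); apply: H.
by rewrite size_rcons (leq_trans Hj).
Qed.

Lemma depthA : exists D, forall L, goodA L -> (size L < D)%N.
Proof.
case: (Classical_Prop.classic (forall n, exists L, size L = n /\ goodA L)) => [H|H].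
  have [f Hf] := koenig goodA_pre H.
  have [k Hk] := term_reachA f.
  by have := Hf k k; rewrite size_mkseq take_oversize ?size_mkseq // => /(_ (leqnn _)).
have [n Hn] := Classical_Pred_Type.not_all_ex_not _ _ H.
exists n => L HL; rewrite ltnNge; apply/negP => Hs; apply: Hn.
exists (take n L); split; first by rewrite size_take_min; apply/minn_idPl.
move=> j; rewrite size_take_min => Hj; rewrite take_takel; last exact: (leq_trans Hj (geq_minl _ _)).
apply: HL; exact: (leq_trans Hj (geq_minr _ _)).
Qed.

Lemma runA_take L : (forall j, (j < size L)%N -> ~ terminal (gposA (take j L))) ->
  forall k, (k <= size L)%N -> runA (nth s0 L) k = gposA (take k L).
Proof.
move=> Hg; elim=> [|k IH] Hk /=; first by rewrite take0.
rewrite IH; last exact: ltnW.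
case: pselect => HT' /=; first by exfalso; exact: (Hg k Hk).
by rewrite (take_nth s0 Hk) gposA_rcons.
Qed.

Lemma in_Pi_gposA L : (forall j, (j < size L)%N -> ~ terminal (gposA (take j L))) ->
  in_Pi (gposA L).
Proof.
move=> Hg; have [H _] := HlA (runA_cons (nth s0 L)).
by have := H (size L); rewrite runA_take // take_size.
Qed.

Lemma first_TA L : (forall j, (j < size L)%N -> ~ terminal (gposA (take j L))) ->
  terminal (gposA L) -> T_A (gposA L).
Proof.
move=> Hg HT; pose c := nth s0 L.
have Hr : forall k, runA c k = gposA (take k L).
  move=> k; case: (leqP k (size L)) => Hk; first exact: runA_take.
  rewrite take_oversize ?(ltnW Hk) //.
  have : forall m, runA c (size L + m) = gposA L.
    elim=> [|m IH]; first by rewrite addn0 runA_take // take_size.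
    by rewrite addnS /= IH; case: pselect.
  by move=> /(_ (k - size L)); rewrite subnKC // ltnW.
have [_ [k Hk]] := HlA (runA_cons c); rewrite Hr in Hk.
case: (ltnP k (size L)) => Hkl; last by rewrite take_oversize in Hk.
by exfalso; apply: (Hg k Hkl); right.
Qed.

Definition idxA (x : gseq G) : nat :=
  ClassicalEpsilon.epsilon (inhabits 0%N) (fun i => (i < glen x)%N /\
     preceq 1 x.2 (gf x i) /\ exists2 q : Q, q \in supp (gf x i) & gf x i q <> Inf).

Lemma idxA_spec x : T_A x -> (idxA x < glen x)%N /\
     preceq 1 x.2 (gf x (idxA x)) /\ exists2 q : Q, q \in supp (gf x (idxA x)) & gf x (idxA x) q <> Inf.
Proof.
move=> [_ [i Hi [Hp Hq]]].
apply: (ClassicalEpsilon.epsilon_spec (inhabits 0%N) (fun i => (i < glen x)%N /\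
     preceq 1 x.2 (gf x i) /\ exists2 q : Q, q \in supp (gf x i) & gf x i q <> Inf)).
by exists i; rewrite -(gf_last x).
Qed.

Definition normA (L : seq Sig) :=
  if pselect (terminal (gposA L)) then take (idxA (gposA L)) L else L.

Lemma vals_bound (x : gseq G) : in_Pi x -> forall i, (i <= glen x)%N ->
  forall q a, gf x i q = Fin a -> (a <= i%:Z * wb G)%R.
Proof.
move=> [H0 [Hs _]]; elim=> [|i IH] Hi q a Ha.
  by move: Ha; rewrite H0 /fI; case: eqP => // _ [<-]; rewrite mul0r.
have [_ _ Hm] := Hs i s0 Hi.
have qs : q \in supp (gf x i.+1) by rewrite inE Ha.
case: (Hm q qs) => [[[q' [q's _ E]] _]|E]; last by rewrite Ha in E.
move: E; rewrite Ha; case E': (gf x i q') => [||b] //= [->].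
have := IH (ltnW Hi) _ _ E'; have [_ Hw] := andP (wb_bound q' (ga x i s0) q).
rewrite -[i.+1]addn1 PoszD mulrDl mul1r => Hb; exact: lerD.
Qed.

End Adam.


Section AdamMem.
Variable G : mpg.
Hypothesis HG : wf_mpg G.
Local Notation Q := (St G).
Local Notation Sig := (Act G).
Variable lA : gstratA G.
Hypothesis HlA : gwinningA lA.
Variable s0 : Sig.
Variable D : nat.
Hypothesis HD : forall L, goodA lA L -> (size L < D)%N.

Definition MemA := ('I_D.+1 * {ffun 'I_D -> Sig})%type.
Definition encA (L : seq Sig) : MemA := (inord (size L), [ffun i : 'I_D => nth s0 L i]).
Definition decA (m : MemA) : seq Sig := take m.1 [seq m.2 i | i <- enum 'I_D].
Definition auA (m : MemA) (o : {set Q}) (s : Sig) : MemA := encA (normA lA (rcons (decA m) s)).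
Definition okO (o : {set Q}) (s : Sig) (O : {set Q}) :=
  (O \in Obs G) && (O :&: post s o != finset.set0).
Definition aoA (m : MemA) (o : {set Q}) (s : Sig) : {set Q} :=
  let O := supp (lA (gposA lA (decA m)) s) in
  if okO o s O then O else odflt finset.set0 [pick O' | okO o s O'].
Definition lGA (h : hist G) (s : Sig) : {set Q} :=
  aoA (foldl (fun m p => auA m p.1 p.2) (encA [::]) h.1) h.2 s.

Lemma decA_enc L : (size L <= D)%N -> decA (encA L) = L.
Proof.
move=> HL; rewrite /decA /encA /= inordK ?ltnS //.
have -> : [seq [ffun i : 'I_D => nth s0 L i] i | i <- enum 'I_D] = mkseq (nth s0 L) D.
  by rewrite /mkseq -val_enum_ord -map_comp; apply: eq_map => i; rewrite ffunE.
by rewrite take_mkseq' // mkseq_nth.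
Qed.

Lemma lGA_fm : finite_memoryA lGA.
Proof. by exists MemA, (encA [::]), auA, aoA. Qed.

Lemma lGA_valid : valid_stratA lGA.
Proof.
move=> h s [o [s' [Hp Eh]]].
have Ho : h.2 \in Obs G by rewrite Eh /=; case: Hp => _ [H _]; exact: H.
rewrite /lGA /aoA; case: ifP => [/andP[]//|_]; case: pickP => [O /andP[]//|H].
have [o' Ho' Hsub] := valid_exists HG s Ho.
have [q qo'] := obs_nonempty HG Ho'.
have := H o'; rewrite /okO Ho' /=; move/negbFE/eqP => E.
have : q \in o' :&: post s h.2 by rewrite inE qo' (fintype.subsetP Hsub q qo').
by rewrite E inE.
Qed.


Definition goodq (o : nat -> {set Q}) (s : nat -> Sig) (F : nat -> fn G) (cnt : nat -> nat)
  (q : nat -> Q) (n : nat) :=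
  forall j, (j <= n)%N -> [/\ q j \in o j, ((j < n)%N -> Delta (q j) (s j) (q j.+1)) &
     exists a, F j (q j) = Fin a /\ (Wsum s q j <= a - (cnt j)%:Z)%R].

Lemma Wsum_ext (s : nat -> Sig) (q q' : nat -> Q) n : (forall j, (j <= n)%N -> q j = q' j) ->
  Wsum s q n = Wsum s q' n.
Proof.
move=> H; apply: eq_bigr => i _.
by rewrite (H i) ?(ltnW (ltn_ord i)) // (H i.+1) ?ltn_ord.
Qed.

Lemma goodq_ext o s F cnt q q' n : (forall j, (j <= n)%N -> q j = q' j) ->
  goodq o s F cnt q n -> goodq o s F cnt q' n.
Proof.
move=> H Hg j Hj; have [H1 H2 [a [Ea Ha]]] := Hg j Hj; split.
- by rewrite -H.
- by move=> Hjn; rewrite -(H j) // -(H j.+1) //; exact: H2.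
exists a; rewrite -H //; split => //; rewrite -(@Wsum_ext s q) //.
by move=> i Hi; apply: H; exact: leq_trans Hi Hj.
Qed.

Lemma goodq_le o s F cnt q m n : (m <= n)%N -> goodq o s F cnt q n -> goodq o s F cnt q m.
Proof.
move=> Hmn Hg j Hj; have [H1 H2 H3] := Hg j (leq_trans Hj Hmn); split => //.
by move=> Hjm; apply: H2; exact: leq_trans Hjm Hmn.
Qed.

Lemma lGA_win : winningA lGA.
Proof.
move=> o s Hp Hc Hwin.
have [Ho0 [HoO Hot]] := Hp.
pose mem k := foldl (fun m p => auA m p.1 p.2) (encA [::]) (hist_of o s k).1.
have Eh : forall k, (hist_of o s k).1 = mkseq (fun i => (o i, s i)) k by [].
have memS : forall k, mem k.+1 = auA (mem k) (o k) (s k).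
  by move=> k; rewrite /mem Eh mkseqSr foldl_rcons -Eh.
have ho : forall k, o k.+1 = aoA (mem k) (o k) (s k) by move=> k; rewrite (Hc k).
pose Ln k := decA (mem k).
pose reset k := terminal (gposA lA (rcons (Ln k) (s k))).
pose cnt := fix cnt n := if n is n'.+1 then (cnt n' + (if pselect (reset n') then 1 else 0))%N else 0%N.
pose F k := (gposA lA (Ln k)).2.
have Ln0 : Ln 0%N = [::] by rewrite /Ln /mem /= decA_enc.
have Hstep : forall k, goodA lA (Ln k) -> supp (F k) = o k ->
  [/\ successor (F k) (s k) (lA (gposA lA (Ln k)) (s k)),
      o k.+1 = supp (lA (gposA lA (Ln k)) (s k)),
      (reset k -> exists i, [/\ (i <= size (Ln k))%N, Ln k.+1 = take i (rcons (Ln k) (s k)),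
          F k.+1 = gf (gposA lA (rcons (Ln k) (s k))) i,
          preceq 1 (lA (gposA lA (Ln k)) (s k)) (F k.+1) &
          exists2 q, q \in supp (F k.+1) & F k.+1 q <> Inf]) &
      (~ reset k -> Ln k.+1 = rcons (Ln k) (s k))].
  move=> k HgL HsL.
  have HLD : (size (Ln k) < D)%N := HD HgL.
  set L := Ln k in HgL HsL HLD *.
  set x := gposA lA L.
  set L' := rcons L (s k).
  have HxL' : gposA lA L' = ext x (s k) (lA x (s k)) by rewrite /L' gposA_rcons.
  have HpreL' : forall j, (j < size L')%N -> ~ terminal (gposA lA (take j L')).
    by move=> j; rewrite /L' size_rcons ltnS => Hj; rewrite take_rcons_le //; apply: HgL.
  have HPi := in_Pi_gposA HlA s0 HpreL'.
  have Hsucc : successor (F k) (s k) (lA x (s k)).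
    case: HPi => _ [Hs _]; have := Hs (glen x) s0.
    rewrite HxL' glen_ext ltnSn gf_ext // gf_last gf_ext_last => /(_ isT).
    by rewrite /ga /ext /= map_rcons nth_rcons size_map ltnn eqxx.
  have HnL : Ln k.+1 = normA lA L'.
    rewrite /Ln memS /auA decA_enc // /normA; case: pselect => Hq /=.
      by rewrite size_take_min (leq_trans (geq_minr _ _)) // /L' size_rcons.
    by rewrite /L' size_rcons.
  split => //.
  - rewrite ho /aoA -/(Ln k) -/L -/x.
    have [HO Hsub _] := Hsucc.
    have -> : okO (o k) (s k) (supp (lA x (s k))) => //.
    rewrite /okO HO /=; have [q qO] := obs_nonempty HG HO.
    apply/set0Pn; exists q; rewrite inE qO -HsL.
    exact: (fintype.subsetP Hsub q qO).
  - move=> Hr.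
    have HTA : T_A (gposA lA L') := first_TA HlA s0 HpreL' Hr.
    have [Hi [Hpre Hfin]] := idxA_spec HTA.
    rewrite glen_gposA /L' size_rcons ltnS in Hi.
    have HnL' : Ln k.+1 = take (idxA (gposA lA L')) L' by rewrite HnL /normA; case: pselect.
    have HF : F k.+1 = gf (gposA lA L') (idxA (gposA lA L')).
      by rewrite /F HnL' gf_gposA // /L' size_rcons ltnW.
    exists (idxA (gposA lA L')); split => //; rewrite HF //.
    by move: Hpre; rewrite HxL'.
  - by move=> Hr; rewrite HnL /normA; case: pselect.
have cntS : forall k, cnt k.+1 = (cnt k + (if pselect (reset k) then 1 else 0))%N by [].
have Inv1 : forall k, [/\ goodA lA (Ln k), supp (F k) = o k & (k <= size (Ln k) + D * cnt k)%N].
  elim=> [|k [Hg Hs Hc']].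
    split.
    - by move=> j; rewrite Ln0 leqn0 => /eqP->; exact: not_terminal_init.
    - by rewrite /F Ln0 /= supp_fI Ho0.
    - by [].
  have [Hs1 Hok1 Hr1 Hnr1] := Hstep k Hg Hs.
  have HLD := HD Hg.
  rewrite cntS; case: pselect => Hr /=.
    have [i [Hi HL1 HF1 [Hsp _] _]] := Hr1 Hr.
    split.
    - move=> j; rewrite HL1 size_take_min leq_min => /andP[Hji _].
      rewrite take_takel // take_rcons_le ?(leq_trans Hji) //.
      by apply: Hg; apply: leq_trans Hji Hi.
    - by rewrite Hok1 Hsp.
    - have : (size (Ln k) < D)%N := HLD. lia.
  split.
  - move=> j; rewrite (Hnr1 Hr) size_rcons leq_eqVlt => /orP[/eqP->|Hj].
      by rewrite take_oversize ?size_rcons.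
    by rewrite take_rcons_le //; apply: Hg.
  - by rewrite Hok1 /F (Hnr1 Hr) gposA_rcons.
  - rewrite (Hnr1 Hr) size_rcons; lia.
have WsumS : forall (q : nat -> Q) k, Wsum s q k.+1 = (Wsum s q k + w (q k) (s k) (q k.+1))%R.
  by move=> q k; rewrite /Wsum big_ord_recr.
have ClaimA : forall k q1 a, q1 \in o k -> F k q1 = Fin a ->
    exists q, goodq o s F cnt q k /\ q k = q1.
  elim=> [|k IH] q1 a Hq1 Ha.
    move: Hq1; rewrite Ho0 inE => /eqP Eq1; subst q1.
    exists (fun _ => qI G); split => // j; rewrite leqn0 => /eqP->; split => //.
    - by rewrite Ho0 inE.
    - by exists 0%R; rewrite /F Ln0 /= /fI eqxx /Wsum big_ord0.
  have [Hg Hs _] := Inv1 k.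
  have [Hs1 Hok1 Hr1 Hnr1] := Hstep k Hg Hs.
  set F' := lA (gposA lA (Ln k)) (s k) in Hs1 Hok1 Hr1 Hnr1.
  have Hq1F : q1 \in supp (F k.+1) by rewrite inE Ha.
  have [a'' [Ea'' Ha'']] : exists a'', F' q1 = Fin a'' /\ (a'' - (cnt k)%:Z <= a - (cnt k.+1)%:Z)%R.
    rewrite cntS; case: pselect => Hr /=.
      have [i [_ _ _ [Hsp Hle] _]] := Hr1 Hr.
      have Hq1' : q1 \in supp F' by rewrite Hsp.
      have := Hle _ Hq1'; rewrite Ha; move: Hq1'; rewrite inE.
      case: (F' q1) => [||b] //= _ Hb; exists b; split => //; lia.
    have HF1 : F k.+1 = F' by rewrite /F (Hnr1 Hr) gposA_rcons.
    by exists a; rewrite -HF1 Ha addn0; split.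
  have Hq1' : q1 \in supp F' by rewrite inE Ea''.
  have [_ _ Hm] := Hs1.
  case: (Hm q1 Hq1') => [[[q' [q's Dq E]] _]|E]; last by rewrite Ea'' in E.
  move: E; rewrite Ea''; case Eb: (F k q') => [||b] //= [Ea2].
  have q'o : q' \in o k by rewrite -Hs.
  have [q [Hgq Eqk]] := IH q' b q'o Eb.
  exists (fun j => if (j <= k)%N then q j else q1); split; last by rewrite ltnn.
  move=> j; rewrite leq_eqVlt => /orP[/eqP->|Hj].
    rewrite ltnn; split; [by []|by rewrite ltnn|exists a; split => //].
    rewrite WsumS leqnn (@Wsum_ext s _ q); last by move=> i Hi; rewrite Hi.
    have [_ _ [bk [Ebk Hbk]]] := Hgq k (leqnn _).
    rewrite Eqk Eb in Ebk; case: Ebk => <- in Hbk.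
    rewrite Eqk; apply: le_trans Ha''; rewrite Ea2 ltnn; lia.
  rewrite ltnS in Hj; have [H1 H2 [aj [Eaj Haj]]] := Hgq j Hj.
  rewrite Hj; split => //.
  - move=> _; case: ifP => Hjk; first by apply: H2.
    have Ejk : j = k by apply/eqP; rewrite eqn_leq Hj leqNgt Hjk.
    by subst j; rewrite Eqk.
  - exists aj; split => //; rewrite (@Wsum_ext s _ q) //.
    by move=> i Hi; rewrite (leq_trans Hi Hj).
have ClaimB : forall m, exists q, goodq o s F cnt q m.
  move=> m.
  have [n [Hmn Hrn]] : exists n, (m <= n)%N /\ reset n.
    apply: Classical_Prop.NNPP => H.
    have Hnr : forall n, (m <= n)%N -> ~ reset n.
      by move=> n Hmn Hr; apply: H; exists n.
    have Hc0 : forall d, cnt (m + d)%N = cnt m.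
      elim=> [|d IH]; first by rewrite addn0.
      rewrite addnS cntS; case: pselect => Hr /=; last by rewrite addn0.
      by exfalso; exact: (Hnr _ (leq_addr _ _) Hr).
    pose n := (m + (D * cnt m + D))%N.
    have [Hg _ Hcn] := Inv1 n.
    have := HD Hg; move: Hcn; rewrite /n Hc0; lia.
  have [Hg Hs _] := Inv1 n.
  have [_ _ Hr1 _] := Hstep n Hg Hs.
  have [i [_ _ _ _ [q1 Hq1 Hfin]]] := Hr1 Hrn.
  have [_ Hs' _] := Inv1 n.+1.
  move: Hq1 Hfin; rewrite inE; case Ea: (F n.+1 q1) => [||a] // _ _.
  have Hq1o : q1 \in o n.+1 by rewrite -Hs' inE Ea.
  have [q [Hq _]] := ClaimA n.+1 q1 a Hq1o Ea.
  by exists q; apply: goodq_le Hq; apply: leq_trans Hmn _.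
pose P (p : seq Q) := if p is [::] then True else goodq o s F cnt (nth (qI G) p) (size p).-1.
have Ppre : forall l x, P (rcons l x) -> P l.
  move=> [//|y l] x; rewrite /P /= size_rcons /= => H.
  apply: (goodq_ext (q := nth (qI G) (rcons (y :: l) x))).
    move=> j Hj; rewrite nth_rcons /=; case: ifP => //.
    by rewrite ltnS Hj.
  by apply: goodq_le H.
have Pmk : forall (q : nat -> Q) n, P (mkseq q n.+1) <-> goodq o s F cnt q n.
  move=> q n; rewrite /P; case E: (mkseq q n.+1) => [|y l].
    by have := size_mkseq q n.+1; rewrite E.
  have -> : (size (y :: l)).-1 = n by rewrite -E size_mkseq.
  by split; apply: goodq_ext => j Hj; rewrite -E nth_mkseq.
have Hall : forall n, exists p, size p = n /\ P p.
  case=> [|m]; first by exists [::].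
  have [q Hq] := ClaimB m.
  by exists (mkseq q m.+1); split; [rewrite size_mkseq|apply/Pmk].
have [f Hf] := koenig Ppre Hall.
have goodf : forall n, goodq o s F cnt f n by move=> n; apply/Pmk.
have Hconc : is_concrete o s f.
  move=> i; have [H1 H2 _] := goodf i.+1 i (leqnSn _); split => //; exact: H2.
have D0 : (0 < D)%N.
  have [Hg _ _] := Inv1 0%N; have := HD Hg; rewrite Ln0 //.
apply: (MP_lt0 (u := Wsum s f) (A := ((D * D)%:Z * wb G + D%:Z)%R) D0); last exact: (Hwin f Hconc).
move=> n; have [_ _ [a [Ea Ha]]] := goodf n n (leqnn _).
have [Hg _ Hcn] := Inv1 n.
have HLD := HD Hg.
have HPi : in_Pi (gposA lA (Ln n)).
  by apply: (in_Pi_gposA HlA s0) => j Hj; apply: Hg; apply: ltnW.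
have := vals_bound s0 HPi (leqnn _) (q := f n) (a := a); rewrite gf_last => /(_ Ea).
rewrite glen_gposA => Hab.
have Hwb := wb_ge0 G.
have Hz : ((size (Ln n))%:Z * wb G <= D%:Z * wb G)%R.
  by apply: ler_wpM2r => //; rewrite lez_nat ltnW.
have Hn : (n%:Z <= D%:Z + D%:Z * (cnt n)%:Z)%R.
  have : (n <= D + D * cnt n)%N by lia.
  by rewrite -lez_nat PoszD PoszM.
have HW : (Wsum s f n <= D%:Z * wb G - (cnt n)%:Z)%R.
  apply: le_trans Ha _; rewrite lerD2r; exact: le_trans Hab Hz.
have HWD : (Wsum s f n * D%:Z <= (D%:Z * wb G - (cnt n)%:Z) * D%:Z)%R.
  by apply: ler_wpM2r.
rewrite PoszM.
nia.
Qed.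
End AdamMem.


Lemma Adam_part (G : mpg) (HG : wf_mpg G) : Adam_wins_Gamma G -> Adam_wins_fm G.
Proof.
move=> [lA HlA].
case: (pickP (fun _ : Act G => true)) => [s0 _|Hnone].
  have [D HD] := depthA HlA.
  exists (lGA lA s0 D); split; first exact: (lGA_valid HG lA s0 D).
  split; first exact: lGA_fm.
  exact (@lGA_win G HG lA HlA s0 D HD).
exists (fun _ _ => finset.set0); split; first by move=> h s; have := Hnone s.
split.
  by exists unit, tt, (fun _ _ _ => tt), (fun _ _ _ => finset.set0).
by move=> o s; have := Hnone (s 0%N).
Qed.

Theorem theorem3 (G : mpg) (HG : wf_mpg G) :
  (Eve_wins_Gamma G -> Eve_wins_fm G) /\
  (Adam_wins_Gamma G -> Adam_wins_fm G).
Proof. split; [exact: Eve_part | exact: Adam_part]. Qed.
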